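(* Let $p$ be a prime number which has Property C, and let $A$ be a sequence of length $4p-4$ over $(\mathbb{Z}/p\mathbb{Z})^2$ that does not contain any zero-sum subsequence of length $p$. Then either $A$ contains an element with multiplicity $p-1$, or all elements of $A$ have multiplicity at most $\frac{p}{2}$.
   Context: Sequences are finite, unordered, and may contain repeated elements; $a^{k}$ denotes $a$ repeated $k$ times, and the multiplicity of an element is the number of times it occurs. A zero-sum subsequence is a subsequence (selection of terms at distinct positions) whose terms sum to $0$. A prime $p$ has Property C if every sequence of length $3p-3$ in $(\mathbb{Z}/p\mathbb{Z})^2$ that does not contain a zero-sum subsequence of length $\le p$ is of the form $a^{p-1}b^{p-1}c^{p-1}$ for some elements $a,b,c$. *)

(* Defs.v *)
From HB Require Import structures.
From mathcomp Require Import all_boot all_order all_algebra.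
Set Implicit Arguments. Unset Strict Implicit. Unset Printing Implicit Defensive.
Import GRing.Theory.
Local Open Scope ring_scope.

Notation Zp2 p := ('Z_p * 'Z_p)%type.

(* A (finite, unordered) sequence is modelled by a list; a subsequence is a
   selection of distinct positions I. [s] has a zero-sum subsequence whose
   length satisfies [P]. *)
Definition has_zs_len (G : zmodType) (s : seq G) (P : nat -> bool) : Prop :=
  exists I : {set 'I_(size s)},
    P #|I| /\ \sum_(i in I) nth 0 s i = 0.

Definition PropertyC (p : nat) : Prop :=
  forall s : seq (Zp2 p),
    size s = (3 * p - 3)%N ->
    ~ has_zs_len s (fun k => (1 <= k <= p)%N) ->
    exists a b c : Zp2 p,
      perm_eq s (nseq (p - 1) a ++ nseq (p - 1) b ++ nseq (p - 1) c).

(* Main.v *)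
From Stdlib Require Import Classical.
Require Import Defs.
From mathcomp Require Import all_boot all_order all_algebra.
From mathcomp Require Import zify.
Set Implicit Arguments. Unset Strict Implicit. Unset Printing Implicit Defensive.
Import GRing.Theory.
Local Open Scope ring_scope.

Lemma cntA (T : eqType) (x0 x : T) (A : seq T) :
  count_mem x A = #|[set i : 'I_(size A) | nth x0 A i == x]|.
Proof.
rewrite -{1}(mkseq_nth x0 A) /mkseq -val_enum_ord -map_comp count_map.
rewrite -sum1_count -sum1_card big_enum_cond /=. apply: eq_bigl => i; by rewrite !inE.
Qed.

Lemma cnt_enum (T : finType) (S : {set T}) (P : pred T) :
  count P (enum S) = #|S :&: [set i | P i]|.
Proof.
by rewrite -sum1_count big_enum_cond -sum1_card; apply: eq_bigl => i; rewrite !inE.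
Qed.

Lemma sub_card (T : finType) (S : {set T}) k :
  (k <= #|S|)%N -> exists K : {set T}, K \subset S /\ #|K| = k.
Proof.
move/card_geqP => [s [us ss sub]]. exists [set x in s]. split.
  by apply/subsetP => x; rewrite inE; exact: sub.
by rewrite cardsE (card_uniqP us).
Qed.

Lemma pmul0 p (v : Zp2 p) : prime p -> v *+ p = 0.
Proof. move=> pp. case: v => a b.
have h: forall k, (a, b) *+ k = (a *+ k, b *+ k).
  elim=> [|k IH]; first by rewrite !mulr0n.
  rewrite !mulrSr IH. reflexivity.
rewrite h. 
have -> : a *+ p = 0. rewrite -mulr_natr. rewrite pchar_Zp ?prime_gt1 //. by rewrite mulr0.
have -> : b *+ p = 0. by rewrite -mulr_natr pchar_Zp ?prime_gt1 // mulr0.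
reflexivity. Qed.

Section Main.
Variable p : nat.
Hypothesis pP : prime p.
Hypothesis PC : PropertyC p.
Hypothesis p3 : (3 <= p)%N.
Variable n : nat.
Variable y : 'I_n -> Zp2 p.
Implicit Types (S T R V A I K J : {set 'I_n}) (k u : 'I_n) (v : Zp2 p).

Definition sumy (S : {set 'I_n}) := \sum_(i in S) y i.
Definition cnt (S : {set 'I_n}) v := #|S :&: [set i | y i == v]|.
Definition shortzs (S : {set 'I_n}) :=
  exists K : {set 'I_n}, K \subset S /\ (1 <= #|K| <= p)%N /\ sumy K = 0.

Lemma cnt_big S v : (p <= cnt S v)%N -> exists K : {set 'I_n}, K \subset S /\ #|K| = p /\ sumy K = 0.
Proof.
move=> h; have [K [sK cK]] := sub_card h. exists K; split.
  exact: subset_trans sK (subsetIl _ _).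
split=> //.
rewrite /sumy (eq_bigr (fun _ => v)) ?sumr_const ?cK ?pmul0 //.
move=> i iK. have := subsetP sK i iK. by rewrite !inE => /andP[_ /eqP].
Qed.

Lemma shortzs_cnt S v : ~ shortzs S -> (cnt S v <= p - 1)%N.
Proof.
move=> nS; rewrite leqNgt; apply/negP => h.
have [K [sK [cK zK]]] := cnt_big (v := v) (S := S) (ltac:(by lia)).
apply: nS; exists K; split => //; split => //; lia.
Qed.

Lemma cnt_pos S k : k \in S -> (0 < cnt S (y k))%N.
Proof. by move=> kS; rewrite card_gt0; apply/set0Pn; exists k; rewrite !inE kS eqxx. Qed.

Lemma cnt_le S v : (cnt S v <= #|S|)%N.
Proof. exact: subset_leq_card (subsetIl _ _). Qed.

Lemma cnt_sub S T v : S \subset T -> (cnt S v <= cnt T v)%N.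
Proof. by move=> h; apply: subset_leq_card; apply: setSI. Qed.

Lemma cntD1 S k : k \in S -> (cnt (S :\ k) (y k) + 1 = cnt S (y k))%N.
Proof.
move=> kS. have := cardsD1 k (S :&: [set i | y i == y k]).
rewrite /cnt setIDAC !inE kS eqxx /= => ->. by rewrite addnC.
Qed.

Lemma cntU1 A u v : y u != v -> cnt (u |: A) v = cnt A v.
Proof.
move=> h; rewrite /cnt setIUl (_ : [set u] :&: _ = set0) ?set0U //.
apply/setP => k; rewrite !inE; case: eqP => // ->; by rewrite (negbTE h).
Qed.

Lemma cntD R V v : V \subset R -> (cnt (R :\: V) v + cnt V v = cnt R v)%N.
Proof.
move=> sV. rewrite /cnt -(cardsID V (R :&: _)) setIAC (setIidPr sV) setIDAC. lia.
Qed.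

Lemma nsub S T : T \subset S -> ~ shortzs S -> ~ shortzs T.
Proof.
move=> sT nS [K [sK h]]; apply: nS; exists K; split => //; exact: subset_trans sK sT.
Qed.

Lemma Lc S : #|S| = (3 * p - 3)%N -> ~ shortzs S ->
  forall v, cnt S v = 0%N \/ cnt S v = (p - 1)%N.
Proof.
move=> cS nS v.
have hlt := shortzs_cnt v nS.
have [i0 i0S] : exists i0, i0 \in S.
  by apply/set0Pn; rewrite -card_gt0 cS; lia.
set s := [seq y i | i <- enum S].
have sE : size s = size (enum S) by rewrite size_map.
have ss : size s = (3 * p - 3)%N by rewrite sE -cardE.
have nz : ~ has_zs_len s (fun k : nat => (1 <= k <= p)%N).
  move=> [I [cI sI]]. apply: nS.
  pose f (i : 'I_(size s)) := nth i0 (enum S) i.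
  have finj : injective f.
    move=> a b; rewrite /f => e. apply: val_inj. apply/eqP.
    rewrite -(nth_uniq i0 _ _ (enum_uniq (mem S))) ?e // -sE; exact: ltn_ord.
  exists (f @: I). split.
    apply/subsetP => _ /imsetP[i _ ->]. rewrite -mem_enum /f mem_nth // -sE; exact: ltn_ord.
  rewrite card_imset //. split=> //.
  rewrite /sumy big_imset /=; last by move=> a b _ _; apply: finj.
  rewrite -[RHS]sI. apply: eq_bigr => i _. rewrite /f /s (nth_map i0) // -sE; exact: ltn_ord.
have [a [b [c pe]]] := PC ss nz.
have := (permP pe) (pred1 v).
rewrite /s count_map cnt_enum !count_cat !count_nseq /= -/(cnt S v).
move: hlt; case: (a == v); case: (b == v); case: (c == v) => /=; lia.
Qed.

Lemma eta S : (3 * p - 2 <= #|S|)%N -> shortzs S.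
Proof.
move=> cS. have [S' [sS' cS']] := sub_card cS.
apply: NNPP => nS. have nS' := nsub sS' nS.
have [i iS] : exists i, i \in S'.
  by apply/set0Pn; rewrite -card_gt0 cS'; lia.
have hlt := shortzs_cnt (y i) nS'.
case: (boolP [exists j in S', y j != y i]) => [/exists_inP [j jS h] | /exists_inP nj].
  have c1 : #|S' :\ i| = (3 * p - 3)%N by move: (cardsD1 i S'); rewrite iS cS'; lia.
  have c2 : #|S' :\ j| = (3 * p - 3)%N by move: (cardsD1 j S'); rewrite jS cS'; lia.
  have L1 := Lc c1 (nsub (subD1set S' i) nS') (y i).
  have L2 := Lc c2 (nsub (subD1set S' j) nS') (y i).
  have e1 : cnt (S' :\ i) (y i) = (cnt S' (y i) - 1)%N by rewrite -(cntD1 iS) addnK.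
  rewrite e1 in L1.
  have e2 : cnt (S' :\ j) (y i) = cnt S' (y i).
    have := cardsD1 j (S' :&: [set i0 | y i0 == y i]).
    by rewrite /cnt setIDAC !inE jS (negbTE h) /= => ->.
  rewrite e2 in L2.
  have := cnt_pos iS. lia.
have sub : S' \subset [set k | y k == y i].
  apply/subsetP=> k kS; rewrite inE.
  apply/negPn/negP => h; apply: nj; exists k => //.
have : cnt S' (y i) = #|S'| by rewrite /cnt (setIidPl sub).
lia.
Qed.

Lemma union_dis R I K : I \subset R -> K \subset R :\: I ->
  [/\ #|I :|: K| = (#|I| + #|K|)%N, sumy (I :|: K) = sumy I + sumy K & I :|: K \subset R].
Proof.
move=> sI sK.
have dis : [disjoint I & K].
  rewrite disjoints_subset; apply/subsetP => i iI; rewrite inE; apply/negP => iK.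
  by move: (subsetP sK i iK); rewrite inE iI.
split.
- by rewrite cardsU (disjoint_setI0 dis) cards0 subn0.
- by rewrite /sumy (eq_bigl [predU I & K]) ?bigU // => i; rewrite !inE.
- by rewrite subUset sI (subset_trans sK (subsetDl _ _)).
Qed.

Lemma core (R : {set 'I_n}) (t0 : nat) :
  (forall I, I \subset R -> sumy I = 0 -> (1 <= #|I| <= p)%N -> (#|I| <= t0)%N) ->
  (2 * t0 <= p)%N -> (1 <= t0)%N -> (t0 + 2 <= p)%N -> #|R| = (3 * p - 3+t0)%N ->
  (forall i, i \in R -> y i != 0) -> False.
Proof.
move=> H1 t2 t1 tp cR H4.
have Zgrow : forall I, I \subset R -> sumy I = 0 -> (#|I| < t0)%N ->
    exists J, [/\ I \subset J, J \subset R, sumy J = 0, (#|J| <= t0)%N & (#|I| < #|J|)%N].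
  move=> I sI zI cI.
  have cD : #|R :\: I| = (#|R| - #|I|)%N by rewrite cardsD (setIidPr sI).
  have [K [sK [cK zK]]] := eta (S := R :\: I) (ltac:(by rewrite cD; lia)).
  have sKR : K \subset R := subset_trans sK (subsetDl R I).
  have cK0 := H1 K sKR zK cK.
  have [cU sU sUR] := union_dis sI sK.
  have zU : sumy (I :|: K) = 0 by rewrite sU zI zK addr0.
  exists (I :|: K); split => //; first exact: subsetUl.
    apply: H1 => //; lia.
  lia.
have grow : forall (k : nat) I, I \subset R -> sumy I = 0 -> (#|I| <= t0)%N -> (t0 - #|I| <= k)%N ->
    exists J, [/\ I \subset J, J \subset R, sumy J = 0 & #|J| = t0].
  elim=> [|k IH] I sI zI cI ck.
    by exists I; split => //; lia.
  case: (ltnP #|I| t0) => h; last by exists I; split => //; lia.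
  have [J [IJ sJ zJ cJ lt]] := Zgrow I sI zI h.
  have [J' [JJ' sJ' zJ' cJ']] := IH J sJ zJ cJ (ltac:(lia)).
  exists J'; split => //; exact: subset_trans IJ JJ'.
have cR' : forall V, V \subset R -> #|V| = t0 -> #|R :\: V| = (3 * p - 3)%N.
  move=> V sV cV. rewrite cardsD (setIidPr sV); lia.
have F3 : forall V, V \subset R -> sumy V = 0 -> #|V| = t0 -> ~ shortzs (R :\: V).
  move=> V sV zV cV [K [sK [cK zK]]].
  have [cU sU sUR] := union_dis sV sK.
  have sKR : K \subset R := subset_trans sK (subsetDl R V).
  have cK0 := H1 K sKR zK cK.
  have := H1 _ sUR (ltac:(by rewrite sU zV zK addr0)) (ltac:(clear -cU cK cK0 cV t2; lia)). clear -cU cK cV; lia.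
have F4 : forall v, (cnt R v <= p - 1)%N.
  move=> v; rewrite leqNgt; apply/negP => h.
  have [K [sK [cK zK]]] := cnt_big (v := v) (S := R) (ltac:(by lia)).
  have := H1 K sK zK (ltac:(clear -cK p3; lia)). clear -cK tp; lia.
have [U [_ sU zU cU]] := grow t0 set0 (sub0set R) (big_set0 _ _ _) (ltac:(by rewrite cards0)) (leq_subr _ _).
have [W eW] : {W : {set 'I_n} | W = R :\: U} by exists (R :\: U).
have LW := Lc (cR' U sU cU) (F3 U sU zU cU). rewrite -eW in LW.
have [u uU] : exists u, u \in U by apply/set0Pn; rewrite -card_gt0 cU; clear -t1; lia.
have uR : u \in R := subsetP sU u uU.
have uW : u \notin W by rewrite eW inE uU.
have cW := cR' U sU cU. rewrite -eW in cW.
have [j jW yj] : exists2 j, j \in W & y j != y u.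
  case: (boolP [exists j in W, y j != y u]) => [/exists_inP [j jW h] | /exists_inP nj]; first by exists j.
  exfalso. have sub : W \subset [set k | y k == y u].
    apply/subsetP=> k kW; rewrite inE.
    apply/negPn/negP => h; apply: nj; exists k => //.
  have e : cnt W (y u) = (3 * p - 3)%N by rewrite /cnt (setIidPl sub) cW.
  case: (LW (y u)); rewrite e; clear -p3; lia.
have uWj : u \notin W :\ j by rewrite in_setD1 negb_and uW orbT.
have [W2 eW2] : {W2 : {set 'I_n} | W2 = u |: (W :\ j)} by exists (u |: (W :\ j)).
have cW2 : #|W2| = (3 * p - 3)%N.
  have e : #|W :\ j| = (3 * p - 4)%N by move: (cardsD1 j W); rewrite jW cW; clear -p3; lia.
  rewrite eW2 cardsU1 uWj e /=. clear -p3; lia.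
have cntW2 : (cnt W2 (y j) + 1 = cnt W (y j))%N.
  by rewrite eW2 cntU1 1?eq_sym // cntD1.
have cWj : cnt W (y j) = (p - 1)%N.
  have := cnt_pos jW. case: (LW (y j)); clear -p3; lia.
have sW2 : shortzs W2.
  apply: NNPP => nW2. case: (Lc cW2 nW2 (y j)); clear -cntW2 cWj p3; lia.
have [V [sV [cV zV]]] := sW2.
have sW2R : W2 \subset R.
  rewrite eW2 subUset sub1set uR /=. apply: subset_trans (subD1set W j) _. by rewrite eW subsetDl.
have sVR := subset_trans sV sW2R.
have cVt := H1 V sVR zV cV.
have [V' [VV' sV' zV' cV']] := grow t0 V sVR zV cVt (leq_subr _ _).
have LV := Lc (cR' V' sV' cV') (F3 V' sV' zV' cV').
have disj : forall k, k \in V' -> k \in W -> False.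
  move=> k kV kW.
  have c1 : cnt W (y k) = (p - 1)%N.
    have := cnt_pos kW. case: (LW (y k)); clear -p3; lia.
  have c2 : (cnt W (y k) <= cnt R (y k))%N by apply: cnt_sub; rewrite eW subsetDl.
  have c3 := F4 (y k).
  have c4 := cntD (y k) sV'.
  have c5 := cnt_pos kV.
  have c6 := cnt_le V' (y k).
  case: (LV (y k)); clear -c1 c2 c3 c4 c5 c6 cV' tp; lia.
have V'U : V' \subset U.
  apply/subsetP=> k kV'. have kR := subsetP sV' k kV'.
  case: (boolP (k \in U)) => // kU. exfalso; apply: (disj k kV'); by rewrite eW inE kU kR.
have V'eq : V' = U by apply/eqP; rewrite eqEcard V'U cU cV' leqnn.
have Vu : V \subset [set u].
  apply/subsetP => k kV. have kW2 := subsetP sV k kV.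
  have kU : k \in U by rewrite -V'eq (subsetP VV').
  have kW : k \notin W by rewrite eW inE kU.
  by move: kW2; rewrite eW2 !inE (negbTE kW) andbF orbF => /eqP ->.
have Veq : V = [set u].
  apply/eqP; rewrite eqEcard Vu cards1 /=; by case/andP: cV.
move: zV; rewrite Veq /sumy big_set1 => yu0.
by move: (H4 u uR); rewrite yu0 eqxx.
Qed.

End Main.


Theorem lemma2p1 (p : nat) (A : seq (Zp2 p)) :
  prime p -> PropertyC p ->
  size A = (4 * p - 4)%N ->
  ~ has_zs_len A (fun k => k == p) ->
  (exists x, x \in A /\ count_mem x A = (p - 1)%N) \/
  (forall x, (2 * count_mem x A <= p)%N).
Proof.
move=> pP PC sA nA.
case: (boolP [exists x : Zp2 p, (x \in A) && (count_mem x A == (p - 1)%N)]) => [/existsP [x /andP[xA /eqP c]] | nex].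
  by left; exists x.
right => x. rewrite leqNgt; apply/negP => hm.
have cZ := cntA 0 x A.
set Z := [set i : 'I_(size A) | nth 0 A i == x] in cZ.
rewrite cZ in hm.
have p2 := prime_gt1 pP.
have padd : forall (I J : {set 'I_(size A)}), [disjoint I & J] -> J \subset Z ->
    (#|I| + #|J| = p)%N -> \sum_(i in I) (nth 0 A i - x) = 0 -> False.
  move=> I J dIJ sJ cIJ zI. apply: nA. exists (I :|: J). split.
    by apply/eqP; rewrite cardsU (disjoint_setI0 dIJ) cards0 subn0 cIJ.
  rewrite (eq_bigl [predU I & J]) ?bigU //; last by move=> i; rewrite !inE.
  have e1 : \sum_(i in I) nth 0 A i = x *+ #|I|.
    have : \sum_(i in I) (nth 0 A i - x) = \sum_(i in I) nth 0 A i - x *+ #|I|.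
      by rewrite sumrB sumr_const.
    by rewrite zI => /esym/eqP; rewrite subr_eq0 => /eqP.
  have e2 : \sum_(i in J) nth 0 A i = x *+ #|J|.
    rewrite -sumr_const; apply: eq_bigr => i iJ; have := subsetP sJ i iJ; by rewrite inE => /eqP.
  have h : x *+ #|I| + x *+ #|J| = 0 by rewrite -mulrnDr cIJ pmul0.
  rewrite e1 e2; exact: h.
have mle : (#|Z| <= p - 1)%N.
  rewrite leqNgt; apply/negP => h.
  have [J [sJ cJ]] := sub_card (S := Z) (k := p) (ltac:(clear -h p2; lia)).
  apply: (padd set0 J) => //.
  - by rewrite -setI_eq0 set0I.
  - by rewrite cards0 cJ.
  - by rewrite big_set0.
have mne : #|Z| != (p - 1)%N.
  apply/negP => /eqP e. move/negP: nex; apply; apply/existsP; exists x.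
  have xA : x \in A by rewrite -has_pred1 has_count cZ e; clear -p2; lia.
  by rewrite xA cZ e eqxx.
have mne2 : #|Z| <> (p - 1)%N by apply/eqP.
have [m em] : {m : nat | #|Z| = m} by exists #|Z|.
rewrite em in hm mle mne2.
have p3 : (2 < p)%N by clear -hm mle mne2; lia.
apply: (@core p pP PC p3 (size A) (fun i => nth 0 A i - x) (~: Z) (p - 1 - m)).
- move=> I sI zI cI. rewrite leqNgt; apply/negP => big.
  have [J [sJ cJ]] := sub_card (S := Z) (k := (p - #|I|)%N) (ltac:(rewrite em; clear -big mle; lia)).
  apply: (padd I J _ sJ _ zI).
    rewrite disjoints_subset; apply: subset_trans sI _; by rewrite setCS.
  rewrite cJ; clear -cI; lia.
- clear -hm mle; lia.
- clear -hm mle mne2; lia.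
- clear -hm mle p2; lia.
- have e2 : #|~: Z| = (size A - m)%N.
    have := cardsC Z; rewrite card_ord em => h; exact: (canRL (addKn m) h).
  rewrite e2 sA. clear -hm mle p2; lia.
- by move=> i; rewrite !inE subr_eq0.
Qed.
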